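(* Let $k\ge60$, $1\le r\le k/60$, $\varepsilon\in(0,1]$. Let $\Lambda_0$ be a probability distribution over pairs $(P,P)$ of distributions on $[n]$, and $\Lambda_{\mathrm{alt}}$ a probability distribution over pairs $(P_1,P_2)$ of distributions on $[n]$ with $\mathrm{d_{TV}}(P_1,P_2)\ge\varepsilon$. Let $A$ be a randomized (possibly adaptive) algorithm that always draws at most $T$ samples in total from $k$ distributions $D_1,\dots,D_k$, and that, whenever $(P_1,P_2)$ is in the support of $\Lambda_{\mathrm{alt}}$ and $I\subseteq[k]$, $|I|=r$, and $D_i=P_2$ for $i\in I$, $D_i=P_1$ for $i\notin I$, outputs an index in $I$ with probability at least $0.9$. Then there exists an algorithm $A'$ which, given sample access to a pair $(P_1,P_2)$ drawn either from $\Lambda_0$ or from $\Lambda_{\mathrm{alt}}$, draws at most $T$ samples from $P_1$ and at most $60rT/k$ samples from $P_2$, and correctly decides which of the two ($\Lambda_0$ or $\Lambda_{\mathrm{alt}}$) the pair was drawn from with probability at least $0.9$ in each case (probability over the pair, the samples and all internal randomness).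
   Context: $\mathrm{d_{TV}}$ is total variation distance. Sample access means independent samples can be requested adaptively. *)

(* Defs.v *)
From HB Require Import structures.
From mathcomp Require Import all_boot all_order all_algebra.
From mathcomp Require Import all_classical all_reals all_analysis.
Set Implicit Arguments. Unset Strict Implicit. Unset Printing Implicit Defensive.
Import Order.TTheory GRing.Theory Num.Theory.
Local Open Scope ring_scope.

Definition is_dist (R : numDomainType) (n : nat) (p : 'I_n -> R) : Prop :=
  (forall x, 0 <= p x) /\ \sum_(x < n) p x = 1.

Definition dTV (R : numFieldType) (n : nat) (p q : 'I_n -> R) : R :=
  2^-1 * \sum_(x < n) `|p x - q x|.

(* A randomized adaptive sampling algorithm (decision tree) with oracles
   indexed by O, samples in 'I_n, outputs in Out:
   - Ret o : stop and output o;
   - Samp i f : draw one sample x from oracle i, continue with f x;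
   - Rand m w f : internal randomness, pick j : 'I_m with probability w j,
     continue with f j. *)
Inductive alg (R : Type) (n : nat) (O Out : Type) : Type :=
| Ret : Out -> alg R n O Out
| Samp : O -> ('I_n -> alg R n O Out) -> alg R n O Out
| Rand : forall m : nat, ('I_m -> R) -> ('I_m -> alg R n O Out) -> alg R n O Out.

Arguments Ret {R n O Out}.
Arguments Samp {R n O Out}.
Arguments Rand {R n O Out}.

Fixpoint alg_wf (R : numDomainType) n O Out (a : alg R n O Out) : Prop :=
  match a with
  | Ret _ => True
  | Samp _ f => forall x, alg_wf (f x)
  | Rand m w f => (forall j, 0 <= w j) /\ \sum_(j < m) w j = 1 /\
                  forall j, alg_wf (f j)
  end.

Fixpoint qbound (R : Type) n O Out (a : alg R n O Out) (S : pred O) (t : nat)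
  : Prop :=
  match a with
  | Ret _ => True
  | Samp o f => if S o then (0 < t)%N /\ forall x, qbound (f x) S t.-1
                else forall x, qbound (f x) S t
  | Rand m w f => forall j, qbound (f j) S t
  end.

Fixpoint prob_out (R : numDomainType) n O Out (a : alg R n O Out)
  (D : O -> 'I_n -> R) (good : pred Out) : R :=
  match a with
  | Ret o => if good o then 1 else 0
  | Samp i f => \sum_(x < n) D i x * prob_out (f x) D good
  | Rand m w f => \sum_(j < m) w j * prob_out (f j) D good
  end.

(* Main.v *)
Require Import Defs.
From HB Require Import structures.
From mathcomp Require Import all_boot all_order all_algebra.
From mathcomp Require Import all_classical all_reals all_analysis.
From mathcomp Require Import lra ring.
From mathcomp Require perm.
Import Order.TTheory GRing.Theory Num.Theory.
Local Open Scope ring_scope.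
Module Helpers.
Set Implicit Arguments. Unset Strict Implicit.

Fixpoint sim (R : Type) n k (I : {set 'I_k}) (c : nat) (a : alg R n 'I_k 'I_k)
  : alg R n bool bool :=
  match a with
  | Ret o => Ret (o \in I)
  | Samp i f => if i \in I then
                  (if c is c'.+1 then Samp true (fun x => sim I c' (f x)) else Ret true)
                else Samp false (fun x => sim I c (f x))
  | Rand m w f => Rand m w (fun j => sim I c (f j))
  end.

Fixpoint EN (R : numDomainType) n O Out (a : alg R n O Out)
  (D : O -> 'I_n -> R) (S : pred O) : R :=
  match a with
  | Ret _ => 0
  | Samp i f => (S i)%:R + \sum_(x < n) D i x * EN (f x) D S
  | Rand m w f => \sum_(j < m) w j * EN (f j) D S
  end.

Lemma prob_out_ge0 (R : numDomainType) n O Out (a : alg R n O Out) D g :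
  alg_wf a -> (forall i x, 0 <= D i x) -> 0 <= prob_out a D g.
Proof.
move=> wf hD; elim: a wf => [ o | i f IH | m w f IH ] /=.
- by case: (g o).
- move=> wf; apply: sumr_ge0 => x _; apply: mulr_ge0 => //; exact: IH.
- move=> [w0 [_ wf]]; apply: sumr_ge0 => x _; apply: mulr_ge0 => //; exact: IH.
Qed.

Lemma EN_ge0 (R : numDomainType) n O Out (a : alg R n O Out) D S :
  alg_wf a -> (forall i x, 0 <= D i x) -> 0 <= EN a D S.
Proof.
move=> wf hD; elim: a wf => [ o | i f IH | m w f IH ] /=.
- by [].
- move=> wf; apply: addr_ge0; first by [].
  apply: sumr_ge0 => x _; apply: mulr_ge0 => //; exact: IH.
- move=> [w0 [_ wf]]; apply: sumr_ge0 => x _; apply: mulr_ge0 => //; exact: IH.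
Qed.

Lemma prob_out_le1 (R : numDomainType) n O Out (a : alg R n O Out) D g :
  alg_wf a -> (forall i, is_dist (D i)) -> prob_out a D g <= 1.
Proof.
move=> wf hD; elim: a wf => [ o | i f IH | m w f IH ] /=.
- by case: (g o).
- move=> wf; case: (hD i) => h0 h1; rewrite -h1; apply: ler_sum => x _.
  by rewrite -[X in _ <= X]mulr1; apply: ler_wpM2l => //; exact: IH.
- move=> [w0 [w1 wf]]; rewrite -w1; apply: ler_sum => x _.
  by rewrite -[X in _ <= X]mulr1; apply: ler_wpM2l => //; exact: IH.
Qed.

Lemma prob_out_T (R : numDomainType) n O Out (a : alg R n O Out) D :
  alg_wf a -> (forall i, is_dist (D i)) -> prob_out a D predT = 1.
Proof.
move=> wf hD; elim: a wf => [ o | i f IH | m w f IH ] /=.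
- by [].
- move=> wf; case: (hD i) => h0 h1; rewrite -h1; apply: eq_bigr => x _.
  by rewrite IH ?mulr1.
- move=> [w0 [w1 wf]]; rewrite -w1; apply: eq_bigr => x _.
  by rewrite IH ?mulr1.
Qed.

Lemma qbound_mono (R : Type) n O Out (a : alg R n O Out) S t t' :
  qbound a S t -> (t <= t')%N -> qbound a S t'.
Proof.
elim: a t t' => [ o | i f IH | m w f IH ] t t' /=.
- by [].
- case: (S i) => [[t0 h] le|h le x]; last exact: IH (h x) le.
  split; first exact: leq_trans le.
  move=> x; apply: IH (h x) _; by rewrite -!subn1 leq_sub2r.
- move=> h le j; exact: IH (h j) le.
Qed.

Lemma EN_le (R : numDomainType) n O Out (a : alg R n O Out) D t :
  alg_wf a -> (forall i, is_dist (D i)) -> qbound a predT t -> EN a D predT <= t%:R.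
Proof.
move=> wf hD; elim: a wf t => [ o | i f IH | m w f IH ] /= wf t.
- by move=> _; rewrite ler0n.
- move=> [t0 h]; case: (hD i) => h0 h1.
  rewrite (_ : t%:R = t.-1%:R + 1 :> R); last by rewrite natr1 prednK.
  rewrite [X in _ <= X]addrC lerD2l.
  have -> : (t.-1%:R : R) = \sum_(x<n) D i x * t.-1%:R by rewrite -mulr_suml h1 mul1r.
  apply: ler_sum => x _.
  by apply: ler_wpM2l => //; exact: IH x (wf x) _ (h x).
- case: wf => [w0 [w1 wf]] h.
  have -> : (t%:R : R) = \sum_(x<m) w x * t%:R by rewrite -mulr_suml w1 mul1r.
  apply: ler_sum => x _.
  by apply: ler_wpM2l => //; exact: IH x (wf x) _ (h x).
Qed.

Lemma sum_ind_card (R : numDomainType) (k : nat) (Sf : {set {set 'I_k}}) (o : 'I_k) :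
  \sum_(I in Sf) (if o \in I then 1 else 0 : R) = #|[set I in Sf | o \in I]|%:R.
Proof.
rewrite -big_mkcondr /=.
rewrite (eq_bigl (fun I => I \in [set I in Sf | o \in I])); last by move=> I; rewrite inE.
by rewrite sumr_const.
Qed.

Lemma sum_prob_out (R : numDomainType) n k (a : alg R n 'I_k 'I_k) D
  (Sf : {set {set 'I_k}}) (N1 : nat) (hN : forall o, #|[set I in Sf | o \in I]| = N1) :
  \sum_(I in Sf) prob_out a D (fun j => j \in I) = N1%:R * prob_out a D predT.
Proof.
elim: a => [ o | i f IH | m w f IH ] /=.
- by rewrite sum_ind_card hN mulr1.
- rewrite exchange_big /= mulr_sumr; apply: eq_bigr => x _.
  by rewrite -mulr_sumr IH mulrCA.
- rewrite exchange_big /= mulr_sumr; apply: eq_bigr => x _.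
  by rewrite -mulr_sumr IH mulrCA.
Qed.

Lemma sum_EN (R : numDomainType) n k Out (a : alg R n 'I_k Out) D
  (Sf : {set {set 'I_k}}) (N1 : nat) (hN : forall o, #|[set I in Sf | o \in I]| = N1) :
  \sum_(I in Sf) EN a D (fun j => j \in I) = N1%:R * EN a D predT.
Proof.
elim: a => [ o | i f IH | m w f IH ] /=.
- by rewrite big1 ?mulr0.
- rewrite big_split /= mulrDr; congr (_ + _).
    transitivity (\sum_(I in Sf) (if i \in I then 1 else 0 : R)).
      by apply: eq_bigr => I _; case: (i \in I).
    by rewrite sum_ind_card hN mulr1.
  rewrite exchange_big /= mulr_sumr; apply: eq_bigr => x _.
  by rewrite -mulr_sumr IH mulrCA.
- rewrite exchange_big /= mulr_sumr; apply: eq_bigr => x _.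
  by rewrite -mulr_sumr IH mulrCA.
Qed.

Lemma sim_wf (R : numDomainType) n k (I : {set 'I_k}) (c : nat) (a : alg R n 'I_k 'I_k) :
  alg_wf a -> alg_wf (sim I c a).
Proof.
elim: a c => [ o | i f IH | m w f IH ] c /=.
- by [].
- move=> wf; case: (i \in I) => //; last by move=> x; exact: IH.
  by case: c => [|c] //= x; exact: IH.
- by move=> [w0 [w1 wf]]; split => //; split => // j; exact: IH.
Qed.

Lemma sim_qtrue (R : Type) n k (I : {set 'I_k}) (c : nat) (a : alg R n 'I_k 'I_k) :
  qbound (sim I c a) (pred1 true) c.
Proof.
elim: a c => [ o | i f IH | m w f IH ] c /=.
- by [].
- case: (i \in I) => /=; last by move=> x; exact: IH.
  case: c => [|c] //=; split => // x; exact: IH.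
- by move=> j; exact: IH.
Qed.

Lemma sim_qfalse (R : Type) n k (I : {set 'I_k}) (c : nat) (a : alg R n 'I_k 'I_k) t :
  qbound a predT t -> qbound (sim I c a) (pred1 false) t.
Proof.
elim: a c t => [ o | i f IH | m w f IH ] c t /=.
- by [].
- move=> [t0 h]; case: (i \in I) => /=.
    case: c => [|c] //= x; apply: IH; apply: qbound_mono (h x) _; exact: leq_pred.
  by split => // x; exact: IH.
- by move=> h j; exact: IH.
Qed.

Lemma sim_alt (R : numDomainType) n k (I : {set 'I_k}) (c : nat) (a : alg R n 'I_k 'I_k) (Q1 Q2 : 'I_n -> R) :
  alg_wf a -> is_dist Q1 -> is_dist Q2 ->
  prob_out a (fun i => if i \in I then Q2 else Q1) (fun j => j \in I) <=
  prob_out (sim I c a) (fun b => if b then Q2 else Q1) (fun b => b).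
Proof.
move=> + [q10 q11] [q20 q21].
have hD : forall (i : 'I_k), is_dist (if i \in I then Q2 else Q1).
  by move=> i; case: (i \in I).
elim: a c => [ o | i f IH | m w f IH ] c /=.
- by [].
- move=> wf; case iI: (i \in I) => /=.
    case: c => [|c] /=.
      have := @prob_out_le1 _ _ _ _ (Samp i f) _ (fun j => j \in I) wf hD.
      by rewrite /= iI.
    apply: ler_sum => x _; apply: ler_wpM2l => //; exact: IH.
  apply: ler_sum => x _; apply: ler_wpM2l => //; exact: IH.
- move=> [w0 [w1 wf]]; apply: ler_sum => x _; apply: ler_wpM2l => //; exact: IH.
Qed.

Lemma avg_lin (R : realFieldType) m (q a b : 'I_m -> R) (d : R) :
  \sum_(x < m) q x = 1 ->
  \sum_(x < m) q x * (1 - a x - b x / d) =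
  1 - \sum_(x < m) q x * a x - (\sum_(x < m) q x * b x) / d.
Proof.
move=> h1.
rewrite (eq_bigr (fun x => q x - q x * a x - (q x * b x) / d)); last first.
  by move=> x _; rewrite !mulrBr mulr1 mulrA.
by rewrite !sumrB h1 mulr_suml.
Qed.

Lemma sim_null (R : realFieldType) n k (I : {set 'I_k}) (c : nat)
  (a : alg R n 'I_k 'I_k) (p : 'I_n -> R) :
  alg_wf a -> is_dist p ->
  1 - prob_out a (fun _ => p) (fun j => j \in I)
    - EN a (fun _ => p) (fun j => j \in I) / (c.+1)%:R
   <= prob_out (sim I c a) (fun _ => p) (fun b => ~~ b).
Proof.
move=> + hp; case: (hp) => p0 p1.
have hD : forall i : 'I_k, is_dist p by [].
have hD0 : forall (i : 'I_k) x, 0 <= p x by [].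
elim: a c => [ o | i f IH | m w f IH ] c /=.
- by move=> _; case: (o \in I) => /=; rewrite mul0r; lra.
- move=> wf; case iI: (i \in I) => /=.
    have Pt0 : 0 <= \sum_(x < n) p x * prob_out (f x) (fun _ => p) (fun j => j \in I).
      by apply: sumr_ge0 => x _; apply: mulr_ge0 => //; apply: prob_out_ge0.
    have E0 : 0 <= \sum_(x < n) p x * EN (f x) (fun _ => p) (fun j => j \in I).
      by apply: sumr_ge0 => x _; apply: mulr_ge0 => //; apply: EN_ge0.
    case: c => [|c] /=.
      rewrite divr1; lra.
    set Pt := \sum_(x < n) _ in Pt0 *. set E := \sum_(x < n) _ in E0 *.
    have S0 : 0 <= \sum_(x < n) p x * prob_out (sim I c (f x)) (fun _ => p) (fun b => ~~ b).
      by apply: sumr_ge0 => x _; apply: mulr_ge0 => //; apply: prob_out_ge0 => //; apply: sim_wf.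
    have hc : 0 < (c.+1)%:R :> R by rewrite ltr0n.
    have hc2 : 0 < (c.+2)%:R :> R by rewrite ltr0n.
    rewrite -[X in _ / X]natr1.
    set C := (c.+1)%:R in hc *.
    have [EC|EC] := lerP E C.
      apply: le_trans (ler_sum _ (fun x _ => ler_wpM2l (p0 x) (IH x c (wf x)))).
      rewrite avg_lin // -/Pt -/E.
      rewrite [X in _ <= _ - _ - _ / X](_ : _ = C) //.
      rewrite lerD2l lerN2.
      rewrite ler_pdivrMr // mulrAC ler_pdivlMr ?addr_gt0 //.
      by rewrite mulrDr mulr1 mulrDl mul1r [X in _ <= X]addrC lerD2l.
    apply: le_trans _ S0.
    rewrite subr_le0; apply: (@le_trans _ _ 1); first by rewrite gerBl.
    rewrite ler_pdivlMr ?addr_gt0 // mul1r [X in _ <= X]addrC lerD2r.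
    exact: ltW.
  rewrite add0r.
  apply: le_trans (ler_sum _ (fun x _ => ler_wpM2l (p0 x) (IH x c (wf x)))).
  by rewrite avg_lin.
- move=> [w0 [w1 wf]].
  apply: le_trans (ler_sum _ (fun x _ => ler_wpM2l (w0 x) (IH x c (wf x)))).
  by rewrite avg_lin.
Qed.
Module SymM.
Import perm.

Lemma sym_card k r (o o' : 'I_k) :
  #|[set I in [set I : {set 'I_k} | #|I| == r] | o \in I]| =
  #|[set I in [set I : {set 'I_k} | #|I| == r] | o' \in I]|.
Proof.
pose F := fun J : {set 'I_k} => [set tperm o o' x | x in J].
have FK : cancel F F.
  move=> J; rewrite /F -imset_comp.
  by rewrite (eq_imset _ (tpermK o o')) imset_id.
have Finj : injective F by exact: can_inj FK.
rewrite -(card_imset _ Finj) (can_imset_pre _ FK); apply: eq_card => J.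
rewrite !inE.
have -> : #|F J| = #|J| by rewrite /F card_imset //; exact: perm_inj.
have -> : (o \in F J) = (o' \in J).
  by rewrite /F -{1}(tpermR o o') mem_imset //; exact: perm_inj.
by [].
Qed.

End SymM.
Import SymM.

Lemma card_rel (R : numDomainType) k r (o0 : 'I_k) :
  let Sf := [set I : {set 'I_k} | #|I| == r] in
  k%:R * (#|[set I in Sf | o0 \in I]|)%:R = (#|Sf|)%:R * r%:R :> R.
Proof.
move=> Sf.
have e1 : \sum_(I in Sf) (#|I|%:R : R) = (#|Sf|)%:R * r%:R.
  rewrite (eq_bigr (fun _ => r%:R)); first by rewrite sumr_const mulr_natl.
  by move=> I; rewrite inE => /eqP ->.
rewrite -e1.
have e2 : forall I : {set 'I_k}, (#|I|%:R : R) = \sum_(o : 'I_k) (if o \in I then 1 else 0).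
  by move=> I; rewrite -big_mkcond sumr_const.
rewrite (eq_bigr _ (fun I _ => e2 I)) exchange_big /=.
rewrite (eq_bigr (fun _ => (#|[set I in Sf | o0 \in I]|)%:R)); last first.
  by move=> o _; rewrite sum_ind_card (@sym_card k r o o0).
by rewrite sumr_const card_ord mulr_natl.
Qed.

Lemma prob_out_meas (d : measure_display) (Om : measurableType d) (R : realType)
  n O Out (a : alg R n O Out) (D : Om -> O -> 'I_n -> R) g :
  (forall i x, measurable_fun setT (fun w => D w i x)) ->
  measurable_fun setT (fun w => prob_out a (D w) g).
Proof.
move=> hD; elim: a => [ o | i f IH | m w f IH ] /=.
- exact: measurable_cst.
- apply: measurable_sum => x; exact: measurable_realfun.measurable_funM.
- apply: measurable_sum => x; apply: measurable_realfun.measurable_funM => //; exact: measurable_cst.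
Qed.

Lemma arith (R : realType) (q e Tb Bb kk rr : R) :
  q * kk = rr -> 60 * rr <= kk -> 60 * (rr * Tb) <= Bb * kk -> 0 <= e -> e <= Tb ->
  0 < kk -> 0 < Bb -> 0 <= q ->
  q * (1 + e / Bb) <= 1 / 10.
Proof.
move=> hq h1 h2 e0 eT k0 B0 q0.
have a1 : q * 60 <= 1.
  have : (q * 60) * kk <= 1 * kk by rewrite mulrAC hq mul1r mulrC.
  by rewrite ler_pM2r.
have a2 : q * Tb * 60 <= Bb.
  have : (q * Tb * 60) * kk <= Bb * kk.
    by rewrite (_ : q * Tb * 60 * kk = 60 * (rr * Tb)) // -hq; ring.
  by rewrite ler_pM2r.
have a3 : q * e <= q * Tb by rewrite ler_wpM2l.
have a4 : q * e / Bb * 60 <= 1.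
  rewrite mulrAC ler_pdivrMr // mul1r; lra.
rewrite mulrDr mulr1 mulrA; lra.
Qed.
End Helpers.
Import Helpers.
Import Helpers.SymM.

Theorem lemmaD1 (R : realType) (n k r T : nat) (eps : R)
  (hk : (60 <= k)%N) (hr1 : (1 <= r)%N) (hrk : (60 * r <= k)%N)
  (heps : 0 < eps <= 1)
  (d0 : measure_display) (Om0 : measurableType d0) (mu0 : probability Om0 R)
  (P : Om0 -> 'I_n -> R)
  (hP : forall w, is_dist (P w))
  (hPm : forall x, measurable_fun setT (fun w => P w x))
  (d1 : measure_display) (Om1 : measurableType d1) (mu1 : probability Om1 R)
  (P1 P2 : Om1 -> 'I_n -> R)
  (hP1 : forall w, is_dist (P1 w)) (hP2 : forall w, is_dist (P2 w))
  (hP1m : forall x, measurable_fun setT (fun w => P1 w x))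
  (hP2m : forall x, measurable_fun setT (fun w => P2 w x))
  (hsep : {ae mu1, forall w, eps <= dTV (P1 w) (P2 w)})
  (A : alg R n 'I_k 'I_k) (hA : alg_wf A) (hAT : qbound A predT T)
  (hAc : {ae mu1, forall w, forall I : {set 'I_k}, #|I| = r ->
           9 / 10 <= prob_out A (fun i => if i \in I then P2 w else P1 w)
                                (fun j => j \in I)}) :
  exists A' : alg R n bool bool,
    alg_wf A' /\
    qbound A' (pred1 false) T /\
    qbound A' (pred1 true) ((60 * r * T) %/ k) /\
    ((9 / 10)%:E <= \int[mu0]_w (prob_out A' (fun _ => P w) (fun b => ~~ b))%:E)%E /\
    ((9 / 10)%:E <= \int[mu1]_w
        (prob_out A' (fun b => if b then P2 w else P1 w) (fun b => b))%:E)%E.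
Proof.
have k0 : (0 < k)%N by apply: leq_trans hk.
pose o0 : 'I_k := Ordinal k0.
pose Sf := [set I : {set 'I_k} | #|I| == r].
have m0 : (0 < #|Sf|)%N.
  rewrite /Sf card_draws card_ord bin_gt0.
  by apply: leq_trans hrk; rewrite leq_pmull.
have m0R : (#|Sf|%:R : R) != 0 by rewrite pnatr_eq0 -lt0n.
pose N1 := #|[set I in Sf | o0 \in I]|.
have hN : forall o, #|[set I in Sf | o \in I]| = N1 by move=> o; exact: sym_card.
have hrel : k%:R * N1%:R = #|Sf|%:R * r%:R :> R by exact: card_rel.
pose B := (60 * r * T %/ k)%N.
pose A' := Rand #|Sf| (fun _ => (#|Sf|%:R : R)^-1) (fun j => sim (enum_val j) B A).
have avg : forall D g, prob_out A' D g =
    (#|Sf|%:R)^-1 * \sum_(I in Sf) prob_out (sim I B A) D g.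
  by move=> D g; rewrite /= -mulr_sumr [in RHS]big_enum_val.
have wfA' : alg_wf A'.
  split; first by move=> _; rewrite invr_ge0 ler0n.
  split; last by move=> j; exact: sim_wf.
  by rewrite sumr_const card_ord -[_ *+ #|Sf|]mulr_natr mulVf.
exists A'.
split; first exact: wfA'.
split; first by move=> j; exact: sim_qfalse.
split; first by move=> j; exact: sim_qtrue.
have hBk : (60 * r * T < B.+1 * k)%N by exact: ltn_ceil.
have hBk' : 60 * (r%:R * T%:R) <= (B.+1)%:R * k%:R :> R.
  rewrite -!natrM ler_nat mulnA; exact: ltnW.
have hrk' : 60 * r%:R <= k%:R :> R by rewrite -natrM ler_nat.
have hq : N1%:R / #|Sf|%:R * k%:R = r%:R :> R.
  by rewrite mulrAC [_ * k%:R]mulrC hrel mulrAC mulfV // mul1r.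
split.
  have -> : ((9/10 : R)%:E = \int[mu0]_w (cst (9/10 : R)%:E w))%E.
    rewrite integral_cst // [X in (_ * X)%E](_ : _ = 1%E) ?mule1 //; exact: probability_setT.
  apply: ge0_le_integral => //.
  - by move=> w _; rewrite lee_fin.
  - by apply/measurable_realfun.measurable_EFinP; apply: prob_out_meas => i x; exact: hPm.
  move=> w _; rewrite lee_fin avg.
  have hpw := hP w.
  set e := EN A (fun _ => P w) predT.
  have e0 : 0 <= e by apply: EN_ge0 => // i x; case: hpw.
  have eT : e <= T%:R by apply: EN_le.
  have S1 : \sum_(I in Sf) (1 - prob_out A (fun _ => P w) (fun j => j \in I)
        - EN A (fun _ => P w) (fun j => j \in I) / (B.+1)%:R)
      <= \sum_(I in Sf) prob_out (sim I B A) (fun _ => P w) (fun b => ~~ b).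
    by apply: ler_sum => I _; exact: sim_null.
  have S2 : \sum_(I in Sf) (1 - prob_out A (fun _ => P w) (fun j => j \in I)
        - EN A (fun _ => P w) (fun j => j \in I) / (B.+1)%:R)
      = #|Sf|%:R - N1%:R - N1%:R * e / (B.+1)%:R.
    rewrite !sumrB sumr_const -mulr_suml (sum_prob_out _ _ hN) (sum_EN _ _ hN).
    by rewrite prob_out_T // mulr1.
  rewrite S2 in S1.
  have kR : 0 < k%:R :> R by rewrite ltr0n.
  have BR : 0 < (B.+1)%:R :> R by rewrite ltr0n.
  have q0 : 0 <= N1%:R / #|Sf|%:R :> R by rewrite divr_ge0 // ler0n.
  have ar := arith hq hrk' hBk' e0 eT kR BR q0.
  have mi : 0 <= (#|Sf|%:R : R)^-1 by rewrite invr_ge0 ler0n.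
  apply: le_trans _ (ler_wpM2l mi S1).
  have -> : (#|Sf|%:R)^-1 * (#|Sf|%:R - N1%:R - N1%:R * e / (B.+1)%:R) =
      1 - N1%:R / #|Sf|%:R * (1 + e / (B.+1)%:R) :> R.
    field; rewrite m0R andbT; apply: lt0r_neq0; apply: (lt_le_trans ltr01); rewrite lerDl ler0n.
  lra.
  apply: le_trans _ (lerB (lexx 1) ar); lra.
have -> : ((9/10 : R)%:E = \int[mu1]_w (cst (9/10 : R)%:E w))%E.
  by rewrite integral_cst // [X in (_ * X)%E](_ : _ = 1%E) ?mule1 //; exact: probability_setT.
apply: ae_ge0_le_integral => //.
- by move=> w _; rewrite lee_fin.
- move=> w _; rewrite lee_fin; apply: (@prob_out_ge0 _ _ _ _ A' _ _ wfA') => -[] x /=.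
    by case: (hP2 w).
  by case: (hP1 w).
- by apply/measurable_realfun.measurable_EFinP; apply: prob_out_meas => -[] x.
move: hAc; apply: filterS => w hw _.
rewrite lee_fin avg.
have mR : 0 < (#|Sf|%:R : R) by rewrite ltr0n.
rewrite ler_pdivlMl //.
have : \sum_(I in Sf) (9/10 : R) <=
    \sum_(I in Sf) prob_out (sim I B A) (fun b : bool => if b then P2 w else P1 w) (fun b => b).
  apply: ler_sum => I; rewrite inE => /eqP hI.
  apply: le_trans (hw I hI) _; exact: sim_alt.
move=> h; apply: le_trans h. by rewrite sumr_const -[X in _ <= X]mulr_natl.
Qed.
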